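(* For every sectorial solution of system (CSF) there exists $c_0>0$ such that $\min_i|\mathbf v_i(t)|\ge c_0$ for all $t\ge0$.
   Context: Fix integers $N\ge1$, $n\ge1$, masses $m_1,\dots,m_N>0$ with $M=\sum_i m_i$, parameters $\sigma>0$, $p>0$, $\kappa\ge0$, and a communication kernel $\phi:[0,\infty)\to(0,\infty)$ that is smooth, positive and non-increasing. Write $\phi_{ij}=\phi(|\mathbf x_i-\mathbf x_j|)$, with $|\cdot|$ the Euclidean norm on $\mathbb R^n$. System (CSF) is, for $i=1,\dots,N$, $$\dot{\mathbf x}_i=\mathbf v_i,\qquad \dot{\mathbf v}_i=\sum_{j=1}^N m_j\phi_{ij}(\mathbf v_j-\mathbf v_i)+\sigma(\theta_i-|\mathbf v_i|^p)\mathbf v_i,\qquad \dot\theta_i=\kappa\sum_{j=1}^N m_j\phi_{ij}(\theta_j-\theta_i),$$ with $\mathbf x_i,\mathbf v_i\in\mathbb R^n$ and initial values $\theta_i(0)>0$; solutions are considered for $t\ge0$. A solution is called sectorial if there exists a unit vector $\mathbf e\in\mathbb R^n$ with $\mathbf e\cdot\mathbf v_i(0)>0$ for all $i=1,\dots,N$. *)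

(* Defs.v *)
From mathcomp Require Import all_boot all_order all_algebra.
From mathcomp Require Import all_classical all_reals all_analysis.
Import Order.TTheory GRing.Theory Num.Theory.
Import numFieldNormedType.Exports.
Set Implicit Arguments. Unset Strict Implicit. Unset Printing Implicit Defensive.
Local Open Scope ring_scope.
Local Open Scope classical_set_scope.

Definition dotp (R : realType) (n : nat) (u w : 'I_n -> R) : R :=
  \sum_(k < n) u k * w k.

Definition enorm (R : realType) (n : nat) (u : 'I_n -> R) : R :=
  Num.sqrt (\sum_(k < n) u k ^+ 2).

Definition comm_kernel (R : realType) (phi : R -> R) : Prop :=
  [/\ (forall (j : nat) (r : R), 0 <= r -> derivable (derive1n j phi) r 1),
      (forall r : R, 0 <= r -> 0 < phi r)
    & (forall r s : R, 0 <= r -> r <= s -> phi s <= phi r)].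

Definition phi_ij (R : realType) (N n : nat) (phi : R -> R)
  (x : 'I_N -> 'I_n -> R -> R) (i j : 'I_N) (t : R) : R :=
  phi (enorm (fun k => x i k t - x j k t)).

Definition CSF_solution (R : realType) (N n : nat) (m : 'I_N -> R)
  (sigma p kappa : R) (phi : R -> R)
  (x v : 'I_N -> 'I_n -> R -> R) (theta : 'I_N -> R -> R) : Prop :=
  [/\ (forall i, 0 < theta i 0),
      (forall i k, {within [set r : R | 0 <= r], continuous (x i k)}),
      (forall i k, {within [set r : R | 0 <= r], continuous (v i k)}),
      (forall i, {within [set r : R | 0 <= r], continuous (theta i)})
    & (forall t : R, 0 < t -> forall i : 'I_N,
        (forall k : 'I_n, is_derive t 1 (x i k) (v i k t)) /\
        (forall k : 'I_n, is_derive t 1 (v i k)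
            (\sum_(j < N) m j * phi_ij phi x i j t * (v j k t - v i k t)
             + sigma * (theta i t - powR (enorm (fun k' => v i k' t)) p) * v i k t)) /\
        is_derive t 1 (theta i)
            (kappa * \sum_(j < N) m j * phi_ij phi x i j t * (theta j t - theta i t)))].

Definition sectorial (R : realType) (N n : nat) (v : 'I_N -> 'I_n -> R -> R) : Prop :=
  exists e : 'I_n -> R, enorm e = 1 /\ forall i, 0 < dotp e (fun k => v i k 0).

(* Main.v *)
Require Import Defs.
From mathcomp Require Import all_boot all_order all_algebra.
From mathcomp Require Import all_classical all_reals all_analysis.
From mathcomp Require Import ring lra.
Import Order.TTheory GRing.Theory Num.Theory.
Import numFieldNormedType.Exports.
Local Open Scope ring_scope.

Module Helpers.
Local Open Scope classical_set_scope.

Section S.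
Variable R : realType.
Definition cont0 (f : R -> R) :=
  forall t : R, 0 <= t -> f @ within [set r : R | 0 <= r] (nbhs t) --> f t.

Lemma cont0P (f : R -> R) : {within [set r : R | 0 <= r], continuous f} -> cont0 f.
Proof. by move=> /subspace_continuousP H t t0; apply: H. Qed.

Lemma cont_gt_fam N (f : 'I_N -> R -> R) t z :
  (forall i, cont0 (f i)) -> 0 <= t -> (forall i, z < f i t) ->
  exists e : R, 0 < e /\ forall s, 0 <= s -> `|t - s| < e -> forall i, z < f i s.
Proof.
move=> cf t0 zf.
have H : forall i, \forall s \near t, [set r : R | 0 <= r] s -> z < f i s.
  move=> i; exact: (cvgr_gt _ (cf i t t0) z (zf i)).
have HH : \forall s \near t, forall i, [set r : R | 0 <= r] s -> z < f i s.
  exact: (filter_forall _ H).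
move: HH => /nbhs_ballP [e e0 He].
exists e; split => // s s0 ts i.
by apply: (He s) => //; rewrite /ball /=.
Qed.
End S.
Arguments cont0 {R}.
Section T.
Variable R : realType.
Lemma is_derive_expl (a s : R) : is_derive s 1 (fun s => expR (a * s)) (a * expR (a * s)).
Proof.
have h1 : is_derive s 1 (fun s : R => a * s) a.
  have := is_deriveZ a (is_derive_id s 1).
  by move=> H; exact: (is_derive_eq H (mulr1 a)).
have := is_derive1_comp (f := expR) (is_derive_expR _) h1.
move=> H; exact: (is_derive_eq H (mulrC _ _)).
Qed.

Lemma is_derive_cont (f : R -> R) (s d : R) : is_derive s 1 f d -> {for s, continuous f}.
Proof. by move=> [df _]; apply: differentiable_continuous; apply/derivable1_diffP. Qed.
End T.
Arguments is_derive_expl {R}.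
Arguments is_derive_cont {R}.
Arguments cont_gt_fam {R N f t z}.
Lemma deriv_left_lt (R : realType) (g : R -> R) (t d : R) :
  is_derive t 1 g d -> 0 < d ->
  exists e : R, 0 < e /\ forall h, 0 < h -> h < e -> g (t - h) < g t.
Proof.
case=> dg dv d0.
have cv := cvg_toP dg dv.
have : \forall h \near 0^', 0 < h^-1 *: ((g \o shift t) (h *: 1) - g t).
  exact: cvgr_gt _ cv 0 d0.
rewrite /dnbhs near_withinE => /nbhs_ballP [e e0 He].
exists e; split => // h h0 he.
have := He (- h).
rewrite /ball /= sub0r opprK gtr0_norm // => /(_ he).
rewrite oppr_eq0 gt_eqF // => /(_ isT).
rewrite /GRing.scale /= mulr1 nmulr_rgt0 ?invr_lt0 ?oppr_lt0 // subr_lt0.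
by rewrite addrC.
Qed.

Arguments deriv_left_lt {R g t d}.
Section B.
Variable R : realType.

Lemma cont0D (f h : R -> R) : cont0 f -> (forall t, {for t, continuous h}) ->
  cont0 (fun s => f s + h s).
Proof.
move=> cf ch t t0; apply: cvgD; first exact: cf.
exact: cvg_within_filter (ch t).
Qed.

Lemma barrier (N : nat) (f : 'I_N -> R -> R) (c K : R) :
  0 <= K ->
  (forall i, cont0 (f i)) ->
  (forall i, c <= f i 0) ->
  (forall t, 0 < t -> forall i, f i t < c -> (forall j, f i t <= f j t) ->
     exists d, is_derive t 1 (f i) d /\ K * (f i t - c) <= d) ->
  forall t, 0 <= t -> forall i, c <= f i t.
Proof.
move=> K0 cf f0 Hd t0 t00 i0.
rewrite leNgt; apply/negP => lt0.
pose E s := expR ((K + 1) * s).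
have E0 s : 0 < E s by exact: expR_gt0.
pose eps := (c - f i0 t0) / (2 * E t0).
have eps0 : 0 < eps.
  by rewrite /eps divr_gt0 ?subr_gt0 // mulr_gt0.
pose g i s := f i s + eps * E s.
have gi0t0 : g i0 t0 < c.
  rewrite /g; have -> : eps * E t0 = (c - f i0 t0) / 2.
    by rewrite /eps; field; rewrite gt_eqF.
  rewrite /g; lra.
pose S := [set s : R | 0 <= s /\ exists i, g i s <= c].
have St0 : S t0 by split => //; exists i0; exact: ltW.
have lbS : lbound S 0 by move=> s [].
have hlb : has_lbound S by exists 0.
have neS : S !=set0 by exists t0.
pose ts := inf S.
have ts0 : 0 <= ts := lb_le_inf neS lbS.
have tsle : forall s, S s -> ts <= s := ge_inf hlb.
have dE (s : R) : is_derive s 1 (fun s => eps * E s) (eps * ((K + 1) * E s)).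
  have := is_deriveZ eps (is_derive_expl (K + 1) s).
  by [].
have cg : forall i, cont0 (g i).
  by move=> i; apply: cont0D => // t; apply: is_derive_cont (dE t).
have [i gi] : exists i, g i ts <= c.
  apply: contrapT => H.
  have H' : forall i, c < g i ts.
    by move=> i; rewrite ltNge; apply/negP => ?; apply: H; exists i.
  have [e [e0 He]] := cont_gt_fam cg ts0 H'.
  have : ts + e / 2 <= ts.
    apply: (lb_le_inf neS) => s Ss; rewrite leNgt; apply/negP => hs.
    case: (Ss) => s0 [j gj].
    have := He s s0 _ j.
    rewrite distrC ger0_norm ?subr_ge0 ?tsle // => /(_ ltac:(lra)).
    lra.
  lra.
have tsp : 0 < ts.
  rewrite lt_neqAle ts0 andbT; apply/eqP => ts_eq.
  move: gi; rewrite -ts_eq /g.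
  have := f0 i; have := mulr_gt0 eps0 (E0 0); lra.
have lt_ts : forall s j, 0 <= s -> s < ts -> c < g j s.
  move=> s j s0 sts; rewrite ltNge; apply/negP => gj.
  have : ts <= s by apply: tsle; split => //; exists j.
  lra.
have ge_ts : forall j, c <= g j ts.
  move=> j; rewrite leNgt; apply/negP => H.
  have cgN : forall _ : 'I_1, cont0 (fun s => - g j s).
    by move=> _ t tp; apply: cvgN; apply: cg.
  have Hz : forall _ : 'I_1, - c < (fun s => - g j s) ts by move=> _ /=; lra.
  have [e [e0 He]] := cont_gt_fam cgN ts0 Hz.
  have {Hz cgN}He := fun s a b => He s a b ord0.
  have hm : 0 < Num.min e ts by rewrite lt_min e0 tsp.
  have hme : Num.min e ts <= e by rewrite ge_min lexx.
  have hmt : Num.min e ts <= ts by rewrite ge_min lexx orbT.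
  move: hm hme hmt; move: (Num.min e ts) => mm hm hme hmt.
  have h1 : 0 <= ts - mm / 2 by lra.
  have h2 : `|ts - (ts - mm / 2)| < e.
    rewrite opprB addrC subrK ger0_norm; lra.
  have h3 : ts - mm / 2 < ts by lra.
  have := He _ h1 h2.
  have := lt_ts _ j h1 h3.
  rewrite /=; lra.
have gieq : g i ts = c by have := ge_ts i; lra.
have fi_lt : f i ts < c.
  by move: gieq; rewrite /g; have := mulr_gt0 eps0 (E0 ts); lra.
have fmin : forall j, f i ts <= f j ts.
  by move=> j; have := ge_ts j; move: gieq; rewrite /g; lra.
have [d [dd Kd]] := Hd ts tsp i fi_lt fmin.
have dg : is_derive ts 1 (g i) (d + eps * ((K + 1) * E ts)).
  exact: is_deriveD dd (dE ts).
have dpos : 0 < d + eps * ((K + 1) * E ts).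
  move: Kd gieq; rewrite /g => Kd gieq.
  have X0 := mulr_gt0 eps0 (E0 ts).
  have -> : eps * ((K + 1) * E ts) = K * (eps * E ts) + eps * E ts by ring.
  have e1 : f i ts - c = - (eps * E ts) by lra.
  rewrite e1 mulrN in Kd; lra.
have [e [e0 He]] := deriv_left_lt dg dpos.
have hm : 0 < Num.min e ts by rewrite lt_min e0 tsp.
have hme : Num.min e ts <= e by rewrite ge_min lexx.
have hmt : Num.min e ts <= ts by rewrite ge_min lexx orbT.
move: hm hme hmt; move: (Num.min e ts) => mm hm hme hmt.
have h1 : 0 <= ts - mm / 2 by lra.
have h3 : ts - mm / 2 < ts by lra.
have h4 : 0 < mm / 2 by lra.
have h5 : mm / 2 < e by lra.
have := He _ h4 h5.
have := lt_ts _ i h1 h3.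
lra.
Qed.
End B.
Arguments barrier {R N f c K}.


Section V.
Variables (R : realType) (n : nat).
Implicit Types a b : 'I_n -> R.

Lemma enorm_ge0 a : 0 <= enorm a.
Proof. exact: sqrtr_ge0. Qed.

Lemma enorm_sq a : enorm a ^+ 2 = \sum_k a k ^+ 2.
Proof. by rewrite /enorm sqr_sqrtr // sumr_ge0 // => k _; exact: sqr_ge0. Qed.

Lemma dotp_self a : dotp a a = enorm a ^+ 2.
Proof. by rewrite enorm_sq /dotp; apply: eq_bigr => k _; rewrite expr2. Qed.

Lemma cs2 a b : dotp a b ^+ 2 <= enorm a ^+ 2 * enorm b ^+ 2.
Proof.
rewrite !enorm_sq /dotp.
have H : 0 <= \sum_(k < n) \sum_(l < n) (a k * b l - a l * b k) ^+ 2.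
  by apply: sumr_ge0 => k _; apply: sumr_ge0 => l _; exact: sqr_ge0.
have E : \sum_(k < n) \sum_(l < n) (a k * b l - a l * b k) ^+ 2 =
  \sum_(k < n) \sum_(l < n) (a k ^+ 2 * b l ^+ 2) + \sum_(k < n) \sum_(l < n) (b k ^+ 2 * a l ^+ 2)
  - 2 * \sum_(k < n) \sum_(l < n) ((a k * b k) * (a l * b l)).
  rewrite mulr_sumr -big_split -sumrB; apply: eq_bigr => k _.
  rewrite mulr_sumr -big_split -sumrB; apply: eq_bigr => l _.
  change ((a k * b l - a l * b k) ^+ 2 = (a k ^+ 2 * b l ^+ 2 + b k ^+ 2 * a l ^+ 2) - 2 * (a k * b k * (a l * b l))); ring.
rewrite E -!big_distrlr /= in H.
rewrite expr2; lra.
Qed.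

Lemma cs a b : `|dotp a b| <= enorm a * enorm b.
Proof.
have h := cs2 a b.
rewrite -(@ler_pXn2r _ 2%N) //; last by rewrite nnegrE mulr_ge0 // enorm_ge0.
  by rewrite real_normK ?num_real // exprMn.
Qed.

Lemma dotp_lin N (w : 'I_N -> R) (vv : 'I_N -> 'I_n -> R) (lam : R) i a :
  dotp a (fun k => \sum_j w j * (vv j k - vv i k) + lam * vv i k) =
  \sum_j w j * (dotp a (vv j) - dotp a (vv i)) + lam * dotp a (vv i).
Proof.
rewrite /dotp.
under eq_bigr do rewrite mulrDr mulr_sumr.
rewrite big_split /= exchange_big /= mulr_sumr.
congr (_ + _); last by apply: eq_bigr => k _; ring.
apply: eq_bigr => j _.
rewrite -sumrB mulr_sumr; apply: eq_bigr => k _; ring.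
Qed.
End V.
Arguments enorm_ge0 {R n}.
Arguments enorm_sq {R n}.
Arguments dotp_self {R n}.
Arguments cs2 {R n}.
Arguments cs {R n}.
Arguments dotp_lin {R n N}.


Section H.
Variable R : realType.

Lemma cont0_sum I (r : seq I) (F : I -> R -> R) :
  (forall k, cont0 (F k)) -> cont0 (fun s => \sum_(k <- r) F k s).
Proof.
elim: r => [|a r IH] H t t0.
  under eq_fun do rewrite big_nil.
  by rewrite big_nil; exact: cvg_cst.
under eq_fun do rewrite big_cons.
by rewrite big_cons; exact: cvgD (H a t t0) (IH H t t0).
Qed.

Lemma cont0_Ml (c : R) (f : R -> R) : cont0 f -> cont0 (fun s => c * f s).
Proof. by move=> H t t0; apply: cvgMl_tmp; apply: H. Qed.

Lemma cont0_M (f g : R -> R) : cont0 f -> cont0 g -> cont0 (fun s => f s * g s).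
Proof. by move=> H1 H2 t t0; apply: cvgM; [apply: H1|apply: H2]. Qed.

Lemma cont0_B (f g : R -> R) : cont0 f -> cont0 g -> cont0 (fun s => f s - g s).
Proof. by move=> H1 H2 t t0; apply: cvgB; [apply: H1|apply: H2]. Qed.

Lemma cont0_N (f : R -> R) : cont0 f -> cont0 (fun s => - f s).
Proof. by move=> H1 t t0; apply: cvgN; apply: H1. Qed.

Lemma cont0_comp (f h : R -> R) : cont0 f -> continuous h -> cont0 (fun s => h (f s)).
Proof. by move=> H1 ch t t0; apply: (continuous_cvg _ (ch _)); apply: H1. Qed.

Lemma cont0_dotp n (a : 'I_n -> R) (y : 'I_n -> R -> R) :
  (forall k, cont0 (y k)) -> cont0 (fun s => dotp a (fun k => y k s)).
Proof. by move=> H; apply: cont0_sum => k; apply: cont0_Ml. Qed.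

Lemma cont0_enorm n (y : 'I_n -> R -> R) :
  (forall k, cont0 (y k)) -> cont0 (fun s => enorm (fun k => y k s)).
Proof.
move=> H; apply: cont0_comp; last exact: sqrt_continuous.
apply: cont0_sum => k.
have -> : (fun s => y k s ^+ 2) = (fun s => y k s * y k s).
  by apply: funext => s; rewrite expr2.
exact: cont0_M.
Qed.

Lemma is_derive_sumf N (F : 'I_N -> R -> R) (dF : 'I_N -> R) (t : R) :
  (forall k, is_derive t 1 (F k) (dF k)) ->
  is_derive t 1 (fun s => \sum_k F k s) (\sum_k dF k).
Proof. by move=> H; have := is_derive_sum H; rewrite fct_sumE. Qed.

Lemma is_derive_Ml (c : R) (f : R -> R) (t df : R) :
  is_derive t 1 f df -> is_derive t 1 (fun s => c * f s) (c * df).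
Proof. by move=> H; have := is_deriveZ c H. Qed.

Lemma is_derive_dotp n (a : 'I_n -> R) (y : 'I_n -> R -> R) (dy : 'I_n -> R) (t : R) :
  (forall k, is_derive t 1 (y k) (dy k)) ->
  is_derive t 1 (fun s => dotp a (fun k => y k s)) (dotp a dy).
Proof. by move=> H; apply: is_derive_sumf => k; apply: is_derive_Ml. Qed.

Lemma is_derive_enorm n (y : 'I_n -> R -> R) (dy : 'I_n -> R) (t : R) :
  (forall k, is_derive t 1 (y k) (dy k)) -> 0 < enorm (fun k => y k t) ->
  is_derive t 1 (fun s => enorm (fun k => y k s))
    (dotp (fun k => y k t) dy / enorm (fun k => y k t)).
Proof.
move=> H npos.
have HS : is_derive t 1 (fun s => \sum_k y k s ^+ 2) (\sum_k (2 * y k t * dy k)).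
  apply: is_derive_sumf => k.
  have := is_deriveX 2 (H k).
  move=> H2; apply: (is_derive_eq H2).
  by rewrite /GRing.scale /= expr1.
have Spos : 0 < \sum_k y k t ^+ 2 by rewrite -enorm_sq exprn_gt0.
have := is_derive1_comp (f := Num.sqrt) (is_derive1_sqrt Spos) HS.
move=> H3; apply: (is_derive_eq H3).
rewrite /dotp -/(enorm (fun k => y k t)).
rewrite -[X in X * _](mulr1 _). 
have -> : \sum_k 2 * y k t * dy k = 2 * \sum_k y k t * dy k.
  by rewrite mulr_sumr; apply: eq_bigr => k _; ring.
field; rewrite gt_eqF //.
Qed.

Lemma lb_fin N (f : 'I_N -> R) : (forall i, 0 < f i) ->
  exists d, 0 < d /\ forall i, d <= f i.
Proof.
move=> H; exists (1 + \sum_j (f j)^-1)^-1.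
have S0 : 0 <= \sum_j (f j)^-1 by apply: sumr_ge0 => j _; rewrite invr_ge0 ltW.
split; first by rewrite invr_gt0; lra.
move=> i.
rewrite -(invrK (f i)) lef_pV2 ?posrE ?invr_gt0 //; last lra.
rewrite (bigD1 i) //=.
have : 0 <= \sum_(j | j != i) (f j)^-1 by apply: sumr_ge0 => j _; rewrite invr_ge0 ltW.
lra.
Qed.

Lemma le_sum_fin N (f : 'I_N -> R) i : (forall j, 0 <= f j) -> f i <= \sum_j f j.
Proof.
move=> H; rewrite (bigD1 i) //=.
have : 0 <= \sum_(j | j != i) f j by apply: sumr_ge0.
lra.
Qed.
End H.
Arguments cont0_sum {R I r F}.
Arguments cont0_Ml {R c f}.
Arguments cont0_M {R f g}.
Arguments cont0_B {R f g}.
Arguments cont0_N {R f}.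
Arguments cont0_comp {R f h}.
Arguments cont0_dotp {R n a y}.
Arguments cont0_enorm {R n y}.
Arguments is_derive_sumf {R N F dF t}.
Arguments is_derive_Ml {R c f t df}.
Arguments is_derive_dotp {R n a y dy t}.
Arguments is_derive_enorm {R n y dy t}.
Arguments lb_fin {R N f}.
Arguments le_sum_fin {R N f}.

End Helpers.
Import Helpers.

Theorem lemma2p2 (R : realType) (N n : nat) (m : 'I_N -> R)
  (sigma p kappa : R) (phi : R -> R)
  (x v : 'I_N -> 'I_n -> R -> R) (theta : 'I_N -> R -> R) :
  (1 <= N)%N -> (1 <= n)%N ->
  (forall i, 0 < m i) -> 0 < sigma -> 0 < p -> 0 <= kappa ->
  comm_kernel phi ->
  CSF_solution m sigma p kappa phi x v theta ->
  sectorial v ->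
  exists c0 : R, 0 < c0 /\
    forall t : R, 0 <= t -> forall i : 'I_N, c0 <= enorm (fun k => v i k t).
Proof.
move=> N1 n1 m0 s0 p0 k0 [_ phi0 _] [th0 cx cv cth Hsol] [e [e1 epos]].
have w0 : forall i j t, 0 <= m j * phi_ij phi x i j t.
  by move=> i j t; rewrite mulr_ge0 ?ltW // phi0 // enorm_ge0.
have cvv : forall i k, cont0 (v i k) by move=> i k; apply: cont0P.
have cthh : forall i, cont0 (theta i) by move=> i; apply: cont0P.
have [a [a0 aH]] := lb_fin th0.
pose A := \sum_i theta i 0.
have AH : forall i, theta i 0 <= A by move=> i; apply: le_sum_fin => j; apply: ltW.
have thlow : forall t, 0 <= t -> forall i, a <= theta i t.
  apply: (barrier (K := 0)) => // t tp i lt mn.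
  have [_ [_ dth]] := Hsol t tp i.
  eexists; split; first exact: dth.
  rewrite mul0r mulr_ge0 // sumr_ge0 // => j _.
  by rewrite mulr_ge0 // subr_ge0.
have thup : forall t, 0 <= t -> forall i, theta i t <= A.
  have := @barrier R N (fun i t => - theta i t) (- A) 0 (lexx _)
    (fun i => cont0_N (cthh i)) (fun i => ltac:(rewrite lerN2; exact: AH)).
  move=> H t t0 i; rewrite -lerN2; apply: H t t0 i => t tp i lt mn.
  have [_ [_ dth]] := Hsol t tp i.
  eexists; split; first exact: is_deriveN dth.
  rewrite mul0r -mulrN -sumrN mulr_ge0 // sumr_ge0 // => j _.
  by rewrite -mulrN opprB mulr_ge0 // subr_ge0 -lerN2.
pose nv i t := enorm (fun k => v i k t).
pose u i t := dotp e (fun k => v i k t).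
have nv0 : forall i t, 0 <= nv i t by move=> i t; exact: enorm_ge0.
have uab : forall i t, - nv i t <= u i t /\ u i t <= nv i t.
  move=> i t; apply/andP; rewrite -ler_norml.
  by have := cs e (fun k => v i k t); rewrite e1 mul1r.
have A0 : 0 <= A by apply: sumr_ge0 => j _; apply: ltW.
have [kap [kap0 kapH]] := lb_fin (f := fun i => u i 0 / (nv i 0 + 1))
  (fun i => divr_gt0 (epos i) (ltr_pwDr ltr01 (nv0 i 0))).
have kapu0 : forall i, kap * nv i 0 <= u i 0.
  move=> i; have := kapH i; rewrite ler_pdivlMr; last by have := nv0 i 0; lra.
  by have := nv0 i 0; nra.
have cone : forall t, 0 <= t -> forall i, 0 <= u i t - kap * nv i t.
  apply: (barrier (K := sigma * A)).
  - by rewrite mulr_ge0 // ltW.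
  - move=> i; apply: cont0_B; first exact: cont0_dotp.
    by apply: cont0_Ml; apply: cont0_enorm.
  - by move=> i; rewrite subr_ge0.
  move=> t tp i lt mn.
  have [ul uu] := uab i t.
  have nvpos : 0 < nv i t.
    rewrite lt_neqAle nv0 andbT; apply/eqP => nvz.
    by move: lt ul; rewrite -nvz mulr0 subr0; lra.
  have [_ [dvv _]] := Hsol t tp i.
  pose dV k := \sum_(j < N) m j * phi_ij phi x i j t * (v j k t - v i k t)
      + sigma * (theta i t - nv i t `^ p) * v i k t.
  pose vi := fun k => v i k t.
  have du : is_derive t 1 (fun s => u i s) (dotp e dV).
    exact: (is_derive_dotp (a := e) dvv).
  have dn : is_derive t 1 (fun s => nv i s) (dotp vi dV / nv i t).
    exact: (is_derive_enorm dvv nvpos).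
  exists (dotp e dV - kap * (dotp vi dV / nv i t)); split.
    exact: (is_deriveB du (is_derive_Ml dn)).
  pose W j := m j * phi_ij phi x i j t.
  pose lam := sigma * (theta i t - nv i t `^ p).
  have E1 : dotp e dV = \sum_j W j * (u j t - u i t) + lam * u i t.
    exact: (dotp_lin W (fun j k => v j k t) lam i e).
  have E2 : dotp vi dV = \sum_j W j * (dotp vi (fun k => v j k t) - dotp vi vi)
      + lam * dotp vi vi.
    exact: (dotp_lin W (fun j k => v j k t) lam i vi).
  have E3 : dotp vi dV <= nv i t * (\sum_j W j * (nv j t - nv i t) + lam * nv i t).
    rewrite E2 dotp_self mulrDr mulr_sumr.
    have -> : enorm vi = nv i t by [].
    apply: lerD; last by rewrite le_eqVlt; apply/orP; left; apply/eqP; ring.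
    apply: ler_sum => j _.
    have h1 : dotp vi (fun k => v j k t) <= nv i t * nv j t.
      exact: (le_trans (ler_norm _) (cs _ _)).
    have -> : nv i t * (W j * (nv j t - nv i t)) = W j * (nv i t * nv j t - nv i t ^+ 2).
      by ring.
    by apply: ler_wpM2l; [exact: w0 | rewrite lerD2r].

  have E4 : dotp vi dV / nv i t <= \sum_j W j * (nv j t - nv i t) + lam * nv i t.
    by rewrite ler_pdivrMr // mulrC.
  have lamL : lam <= sigma * A.
    apply: ler_wpM2l; first exact: ltW.
    have := thup t (ltW tp) i; have := powR_ge0 (nv i t) p; lra.
  have E5 : \sum_j W j * (u j t - u i t) + lam * u i t
      - kap * (\sum_j W j * (nv j t - nv i t) + lam * nv i t)
      = \sum_j W j * ((u j t - kap * nv j t) - (u i t - kap * nv i t))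
        + lam * (u i t - kap * nv i t).
    rewrite mulrDr (mulr_sumr _ _ _ kap).
    have -> : forall (X Y Z T : R), X + Y - (Z + T) = (X - Z) + (Y - T) by move=> *; ring.
    rewrite -sumrB; congr (_ + _); last by ring.
    by apply: eq_bigr => j _; ring.
  have E6 : 0 <= \sum_j W j * ((u j t - kap * nv j t) - (u i t - kap * nv i t)).
    apply: sumr_ge0 => j _; apply: mulr_ge0; first exact: w0.
    by rewrite subr_ge0; exact: mn.
  have E7 : kap * (dotp vi dV / nv i t) <=
      kap * (\sum_j W j * (nv j t - nv i t) + lam * nv i t).
    by apply: ler_wpM2l => //; exact: ltW.
  move: lt => /= lt.
  have E8 : sigma * A * (u i t - kap * nv i t) <= lam * (u i t - kap * nv i t).
    by nra.
  rewrite subr0 E1; lra.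
pose r := a `^ p^-1.
have r0 : 0 < r by apply: powR_gt0.
have rp : r `^ p = a by rewrite /r -powRrM mulVf ?gt_eqF // powRr1 // ltW.
have [d [d0 dH]] := lb_fin (f := fun i => u i 0) epos.
pose c := Num.min d (kap * r).
have c0 : 0 < c by rewrite lt_min d0 mulr_gt0.
have cd : c <= d by rewrite ge_min lexx.
have ckr : c <= kap * r by rewrite ge_min lexx orbT.
have ulow : forall t, 0 <= t -> forall i, c <= u i t.
  apply: (barrier (K := 0)) => //.
  - by move=> i; apply: cont0_dotp.
  - by move=> i; apply: le_trans cd (dH i).
  move=> t tp i lt mn.
  have [_ [dvv _]] := Hsol t tp i.
  pose dV k := \sum_(j < N) m j * phi_ij phi x i j t * (v j k t - v i k t)
      + sigma * (theta i t - nv i t `^ p) * v i k t.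
  have du : is_derive t 1 (fun s => u i s) (dotp e dV).
    exact: (is_derive_dotp (a := e) dvv).
  exists (dotp e dV); split => //.
  pose W j := m j * phi_ij phi x i j t.
  pose lam := sigma * (theta i t - nv i t `^ p).
  have E1 : dotp e dV = \sum_j W j * (u j t - u i t) + lam * u i t.
    exact: (dotp_lin W (fun j k => v j k t) lam i e).
  rewrite mul0r E1; apply: addr_ge0.
    apply: sumr_ge0 => j _; apply: mulr_ge0; first exact: w0.
    by rewrite subr_ge0; exact: mn.
  have hc := cone t (ltW tp) i.
  have nvr : nv i t < r.
    rewrite -(ltr_pM2l kap0); move: lt => /= lt; lra.
  have : nv i t `^ p < a.
    by rewrite -rp; apply: gt0_ltr_powR => //; rewrite nnegrE ?nv0 // ltW.
  have := thlow t (ltW tp) i.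
  move=> h1 h2.
  apply: mulr_ge0; first by apply: mulr_ge0; [exact: ltW | lra].
  by have := nv0 i t; nra.
exists c; split => // t t0 i.
have := ulow t t0 i; have := uab i t.
rewrite /u /nv; lra.
Qed.
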